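(* Let $c=1/3$ for quadrangulations and $c=1/2$ for triangulations. For $0<u<1$, let $\mathcal P(L;u)$ be the limiting density of $L(ku)$ as $k\to\infty$ under $P_k$ (with $k$ ranging over integers for which $ku$ is an integer): $$\mathcal P(L;u)=\frac{2}{\sqrt\pi}\frac{\sqrt L}{c^{3/2}}e^{-L/c}\cdot\frac{\left(e^{\frac{L}{cb}}\sqrt{\frac{\pi L}{cb}}\left(1-\mathrm{erf}\sqrt{\frac{L}{cb}}\right)-1\right)p\!\left(\frac{L}{cb}\right)+r\!\left(\frac{L}{cb}\right)}{4(\sqrt b+b)^3},$$ where $$b=b(u)=\frac{(1-u)^2}{u^2},\qquad p(\ell)=2b(b^2-1)\ell^2-(5b^3+3b+4)\ell+6(b^3-1),\qquad r(\ell)=b(15b^2-1)\ell+2(5b^3-1).$$ Then $\tilde{\mathcal P}(R;u)=b(u)\,\mathcal P(b(u)R;u)$, the limiting density of $R(d)=\mathcal L(d)/(k-d)^2$ at $d=ku$, converges as $u\to1$ to $$\tilde{\mathcal P}(R;1)=2\sqrt{\frac{R}{\pi c^5}}\,(R+c)-\frac{R}{c^3}(2R+3c)\,e^{R/c}\left(1-\mathrm{erf}\sqrt{\frac Rc}\right).$$ Moreover $\mathcal P(L;u)\to\frac{2}{\sqrt\pi}\frac{\sqrt L}{c^{3/2}}e^{-L/c}$ as $u\to0$.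
   Context: A planar quadrangulation (resp. triangulation) is a planar map all of whose faces have degree 4 (resp. 3). A $k$-pointed-rooted map carries: - a marked vertex $v_0$; - a marked edge $e_1$ oriented from a vertex $v_1$ at graph distance $k$ from $v_0$ to a vertex at distance $k-1$. Cutting along the leftmost shortest path from $v_1$ to $v_0$ (first step $e_1$, then always the leftmost edge decreasing the distance to $v_0$) gives a $k$-slice. Its left boundary consists of the $k$ edges from $v_1$ to $v_0$, and its right boundary of the $k-1$ edges from the endpoint of $e_1$ to $v_0$. Hull perimeter, quadrangulations ($2\le d\le k-1$). Start at the right-boundary vertex $v^{(0)}$ at distance $d-1$. Repeatedly, from $v^{(i)}$, follow the leftmost 2-step path $v^{(i)}\to w\to v^{(i+1)}$, with respect to the first edge of the leftmost shortest path from $v^{(i)}$ to $v_0$, where $d(v_0,w)=d$, $d(v_0,v^{(i+1)})=d-1$ and $v^{(i+1)}\ne v^{(i)}$. This stops after $p$ steps at the left-boundary vertex at distance $d-1$, and $\mathcal L(d)=2p$. Hull perimeter, triangulations ($1\le d\le k-1$). Start at the right-boundary vertex at distance $d$. Repeatedly follow the leftmost edge, in the same sense, to a distinct vertex at distance $d$, until reaching the left-boundary vertex at distance $d$ after $p$ steps; then $\mathcal L(d)=p$. $P_k$ is the $N\to\infty$ limit of the uniform measure on $k$-pointed-rooted maps of the given type with $N$ faces. $L(d)=\mathcal L(d)/d^2$, and $\mathrm{erf}(a)=\frac{2}{\sqrt\pi}\int_0^ae^{-z^2}dz$. *)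

(* Defs.v *)
From Stdlib Require Import Reals.
From Coquelicot Require Import Coquelicot.
Open Scope R_scope.

Definition erf (a : R) : R :=
  2 / sqrt PI * RInt (fun z => exp (- (z ^ 2))) 0 a.

Definition bU (u : R) : R := (1 - u) ^ 2 / u ^ 2.

Definition pP (b l : R) : R :=
  2 * b * (b ^ 2 - 1) * l ^ 2 - (5 * b ^ 3 + 3 * b + 4) * l + 6 * (b ^ 3 - 1).

Definition rP (b l : R) : R :=
  b * (15 * b ^ 2 - 1) * l + 2 * (5 * b ^ 3 - 1).

Definition calP (c u L : R) : R :=
  let b := bU u in
  let l := L / (c * b) in
  2 / sqrt PI * sqrt L / (c * sqrt c) * exp (- L / c) *
  (((exp l * sqrt (PI * l) * (1 - erf (sqrt l)) - 1) * pP b l + rP b l)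
   / (4 * (sqrt b + b) ^ 3)).

Definition tildeP (c u R0 : R) : R := bU u * calP c u (bU u * R0).

Definition tildeP1 (c R0 : R) : R :=
  2 * sqrt (R0 / (PI * c ^ 5)) * (R0 + c)
  - R0 / c ^ 3 * (2 * R0 + 3 * c) * exp (R0 / c) * (1 - erf (sqrt (R0 / c))).

Definition calP0 (c L : R) : R :=
  2 / sqrt PI * sqrt L / (c * sqrt c) * exp (- L / c).

(* Main.v *)
Require Import Defs.
From Stdlib Require Import Reals Lra.
From Coquelicot Require Import Coquelicot.
Open Scope R_scope.

Lemma cont_g : forall y, continuity_pt (fun x0 : R => exp (- (x0 * (x0 * 1)))) y.
Proof. intros y. apply derivable_continuous_pt. reg. Qed.

Lemma exRInt_g : forall a b, ex_RInt (fun x : R => exp (- (x * (x * 1)))) a b.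
Proof. intros. apply (@ex_RInt_continuous R_CompleteNormedModule). intros z _.
 apply continuity_pt_filterlim. apply cont_g. Qed.

Lemma lim_comp (f g H : R -> R) (F : (R -> Prop) -> Prop) {FF : Filter F} (l : R) :
  F (fun u => f u = H (g u)) -> filterlim g F (locally 0) -> continuous H 0 -> H 0 = l ->
  filterlim f F (locally l).
Proof.
  intros He Hg Hc Hl. subst l.
  apply (filterlim_ext_loc (fun u => H (g u))).
  - apply (filter_imp _ _ (fun x (h : f x = H (g x)) => eq_sym h)) ; exact He.
  - exact (filterlim_comp _ _ _ g H F (locally 0) _ Hg Hc).
Qed.

Definition H1 (c R0 : R) (s : R) : R :=
  let E0 := exp (R0/c) * sqrt (PI*(R0/c)) * (1 - erf (sqrt (R0/c))) in
  2 / sqrt PI * sqrt R0 / (c * sqrt c) * exp (- (s^2*R0) / c) *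
  (((E0 - 1) * pP (s^2) (R0/c) + rP (s^2) (R0/c)) / (4 * (1 + s)^3)).

Lemma eq1 c R0 u : 0 < c -> 0 < R0 -> 0 < u < 1 -> tildeP c u R0 = H1 c R0 ((1-u)/u).
Proof.
  intros Hc HR Hu. unfold tildeP, calP, H1. cbv zeta.
  set (s := (1-u)/u).
  assert (Hs : 0 < s) by (unfold s; apply Rdiv_lt_0_compat; lra).
  assert (Hb : bU u = s^2) by (unfold bU, s; field; lra).
  rewrite Hb.
  replace (s^2*R0/(c*s^2)) with (R0/c) by (field; split; lra).
  rewrite (sqrt_mult_alt (s^2) R0) by (apply pow2_ge_0).
  rewrite sqrt_pow2 by lra.
  assert (sqrt PI > 0) by (apply sqrt_lt_R0; apply PI_RGT_0).
  assert (sqrt c > 0) by (apply sqrt_lt_R0; lra).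
  field. repeat split; try nra.
Qed.

Lemma H1_0 c R0 : 0 < c -> 0 < R0 -> H1 c R0 0 = tildeP1 c R0.
Proof.
  intros Hc HR. unfold H1, tildeP1, pP, rP. cbv zeta.
  assert (HP : 0 < PI) by apply PI_RGT_0.
  assert (sqrt PI > 0) by (apply sqrt_lt_R0; lra).
  assert (sqrt c > 0) by (apply sqrt_lt_R0; lra).
  assert (sqrt R0 > 0) by (apply sqrt_lt_R0; lra).
  rewrite (sqrt_mult_alt PI (R0/c)) by lra.
  rewrite (sqrt_div_alt R0 (PI * c^5)) by (apply Rmult_lt_0_compat; [lra| apply pow_lt; lra]).
  rewrite (sqrt_mult_alt PI (c^5)) by lra.
  replace (c^5) with ((c^2)^2 * c) by ring.
  rewrite (sqrt_mult_alt ((c^2)^2) c) by (apply pow2_ge_0).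
  rewrite (sqrt_pow2 (c^2)) by (apply pow2_ge_0).
  rewrite (sqrt_div_alt R0 c) by lra.
  replace (- (0^2*R0)/c) with 0 by (field; lra). rewrite exp_0.
  set (X := exp (R0/c) * (1 - erf (sqrt R0 / sqrt c))).
  replace (exp (R0 / c) * (sqrt PI * (sqrt R0 / sqrt c)) * (1 - erf (sqrt R0 / sqrt c)))
    with (sqrt PI * (sqrt R0 / sqrt c) * X) by (unfold X; ring).
  replace (R0 / c ^ 3 * (2 * R0 + 3 * c) * exp (R0 / c) * (1 - erf (sqrt R0 / sqrt c)))
    with (R0 / c ^ 3 * (2 * R0 + 3 * c) * X) by (unfold X; ring).
  clearbody X.
  assert (Ec : c = sqrt c * sqrt c) by (rewrite sqrt_sqrt; lra).
  assert (Er : R0 = sqrt R0 * sqrt R0) by (rewrite sqrt_sqrt; lra).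
  set (sc := sqrt c) in *. set (sr := sqrt R0) in *. set (sp := sqrt PI) in *.
  clearbody sc sr sp. subst c R0.
  field. lra.
Qed.

Lemma H1_cont c R0 : 0 < c -> continuous (H1 c R0) 0.
Proof.
  intros Hc. apply (@ex_derive_continuous R_AbsRing R_NormedModule). unfold H1, pP, rP. auto_derive.
  repeat split; try lra; try (intro; lra).
Qed.

Lemma at_left1_ev (P : R -> Prop) : (forall u, 0 < u < 1 -> P u) -> at_left 1 P.
Proof.
  intros HP. unfold at_left, within. exists (mkposreal (1/2) ltac:(lra)).
  intros y Hy Hlt. apply HP. 
  unfold ball in Hy; simpl in Hy; unfold AbsRing_ball, abs, minus, plus, opp in Hy; simpl in Hy.
  apply Rabs_lt_between' in Hy. lra.
Qed.

Lemma at_right0_ev (P : R -> Prop) : (forall u, 0 < u < 1 -> P u) -> at_right 0 P.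
Proof.
  intros HP. unfold at_right, within. exists (mkposreal (1/2) ltac:(lra)).
  intros y Hy Hlt. apply HP. 
  unfold ball in Hy; simpl in Hy; unfold AbsRing_ball, abs, minus, plus, opp in Hy; simpl in Hy.
  apply Rabs_lt_between' in Hy. lra.
Qed.

Lemma g1_lim : filterlim (fun u => (1-u)/u) (at_left 1) (locally 0).
Proof.
  eapply filterlim_filter_le_1; [apply filter_le_within; apply locally_filter|].
  replace (locally 0) with (locally ((fun u => (1-u)/u) 1)) by (f_equal; cbv beta; field).
  apply (@ex_derive_continuous R_AbsRing R_NormedModule (fun u => (1-u)/u)). auto_derive. lra.
Qed.

Lemma g2_lim : filterlim (fun u => u/(1-u)) (at_right 0) (locally 0).
Proof.
  eapply filterlim_filter_le_1; [apply filter_le_within; apply locally_filter|].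
  assert (E : (fun u => u/(1-u)) 0 = 0) by (cbv beta; field).
  rewrite <- E at 2.
  apply (@ex_derive_continuous R_AbsRing R_NormedModule (fun u => u/(1-u))). auto_derive. lra.
Qed.

Definition H2 (c L : R) (t : R) : R :=
  let x := L / c in
  let q := sqrt x in
  2 / sqrt PI * sqrt L / (c * sqrt c) * exp (- L / c) *
  (((exp (x * t^2) * (sqrt PI * (q * t)) * (1 - erf (q * t)) - 1) *
     (2 * x^2 * (1 - t^4) * t^4 - x * (5 * t^2 + 3 * t^6 + 4 * t^8) + 6 * (1 - t^6))
    + (x * (15 - t^4) * t^2 + 2 * (5 - t^6))) / (4 * (1 + t)^3)).

Lemma eq2 c L u : 0 < c -> 0 < L -> 0 < u < 1 -> calP c u L = H2 c L (u/(1-u)).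
Proof.
  intros Hc HL Hu. unfold calP, H2. cbv zeta.
  set (t := u/(1-u)).
  assert (Ht : 0 < t) by (unfold t; apply Rdiv_lt_0_compat; lra).
  assert (Hb : bU u = (1/t)^2) by (unfold bU, t; field; lra).
  rewrite Hb.
  replace (L/(c*(1/t)^2)) with (L/c * t^2) by (field; split; lra).
  rewrite (sqrt_mult_alt PI (L/c*t^2)) by (apply Rlt_le, PI_RGT_0).
  rewrite (sqrt_mult_alt (L/c) (t^2)) by (apply Rlt_le, Rdiv_lt_0_compat; lra).
  rewrite (sqrt_pow2 t) by lra.
  rewrite (sqrt_pow2 (1/t)) by (apply Rlt_le, Rdiv_lt_0_compat; lra).
  unfold pP, rP.
  assert (sqrt PI > 0) by (apply sqrt_lt_R0; apply PI_RGT_0).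
  assert (sqrt c > 0) by (apply sqrt_lt_R0; lra).
  field. repeat split; try nra.
Qed.

Lemma H2_0 c L : 0 < c -> H2 c L 0 = calP0 c L.
Proof.
  intros Hc. unfold H2, calP0. cbv zeta.
  assert (sqrt PI > 0) by (apply sqrt_lt_R0; apply PI_RGT_0).
  assert (sqrt c > 0) by (apply sqrt_lt_R0; lra).
  field. lra.
Qed.

Lemma H2_cont c L : 0 < c -> continuous (H2 c L) 0.
Proof.
  intros Hc. apply (@ex_derive_continuous R_AbsRing R_NormedModule). unfold H2, erf.
  auto_derive.
  repeat split; try lra; try (intro; lra); try apply exRInt_g.
  apply filter_forall. apply cont_g.
Qed.

Theorem mainTheorem13 (c : R) (hc : c = 1 / 3 \/ c = 1 / 2) :
  (forall R0 : R, 0 < R0 ->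
     filterlim (fun u => tildeP c u R0) (at_left 1) (locally (tildeP1 c R0))) /\
  (forall L : R, 0 < L ->
     filterlim (fun u => calP c u L) (at_right 0) (locally (calP0 c L))).
Proof.
  assert (Hc : 0 < c) by (destruct hc; lra).
  split.
  - intros R0 HR. apply (@lim_comp _ (fun u => (1-u)/u) (H1 c R0) (at_left 1) _ (tildeP1 c R0)).
    + apply at_left1_ev. intros u Hu. apply eq1; auto.
    + apply g1_lim.
    + apply H1_cont; auto.
    + apply H1_0; auto.
  - intros L HL. apply (@lim_comp _ (fun u => u/(1-u)) (H2 c L) (at_right 0) _ (calP0 c L)).
    + apply at_right0_ev. intros u Hu. apply eq2; auto.
    + apply g2_lim.
    + apply H2_cont; auto.
    + apply H2_0; auto.
Qed.
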